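(* Let $U=(\mathbb{R}^2\setminus\{0\})\times\mathbb{R}^{0|1}$ with even coordinates $(p,q)$ and odd coordinate $\tau$. Let $F$ be a superfunction on $U$ of pure parity that is homogeneous of degree $2$, i.e. $\mathcal{E}(F)=2F$. Then for all superfunctions $G,H$ on $U$ of pure parity, $$ \{F,\{G,H\}_{\rm gPb}\} =(-1)^{\sigma(F)}\,\{\{F,G\},H\}_{\rm gPb}+(-1)^{\sigma(F)(\sigma(G)+1)}\,\{G,\{F,H\}\}_{\rm gPb}. $$ In other words, the ghost Poisson bracket is invariant under the action of the conformal Lie superalgebra $\mathcal{K}(1)$ (the space of degree-$2$ homogeneous superfunctions with the Poisson bracket).
   Context: Superfunctions on $U$ are expressions $F=F_0(p,q)+\tau F_1(p,q)$ with $F_0,F_1$ smooth complex-valued functions on $\mathbb{R}^2\setminus\{0\}$, $\tau^2=0$, $\tau$ commuting with $p,q$. Parity: $\sigma(F_0)=0$, $\sigma(\tau F_1)=1$. Partial derivatives $\partial/\partial p,\partial/\partial q$ act coefficientwise, and $\partial(F_0+\tau F_1)/\partial\tau=F_1$. The Euler field is $\mathcal{E}=p\,\partial_p+q\,\partial_q+\tau\,\partial_\tau$. The Poisson bracket is $$\{F,G\}=\frac{\partial F}{\partial p}\frac{\partial G}{\partial q}-\frac{\partial F}{\partial q}\frac{\partial G}{\partial p}+\frac{\partial F}{\partial \tau}\frac{\partial G}{\partial \tau},$$ and the ghost Poisson bracket is the odd operation $$\{F,G\}_{\rm gPb}=\frac{\partial F}{\partial \tau}\,\mathcal{E}(G)-(-1)^{\sigma(F)}\,\mathcal{E}(F)\,\frac{\partial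 G}{\partial \tau}+\tau\left(\frac{\partial F}{\partial p}\frac{\partial G}{\partial q}-\frac{\partial F}{\partial q}\frac{\partial G}{\partial p}\right).$$ *)

(* Defs.v *)
From Stdlib Require Import Reals List.
From Coquelicot Require Import Coquelicot.
Set Implicit Arguments.
Open Scope R_scope.

Definition Dp (f : R -> R -> C) : R -> R -> C :=
  fun p q => (Derive (fun t => fst (f t q)) p, Derive (fun t => snd (f t q)) p).
Definition Dq (f : R -> R -> C) : R -> R -> C :=
  fun p q => (Derive (fun t => fst (f p t)) q, Derive (fun t => snd (f p t)) q).

Fixpoint iterD (l : list bool) (f : R -> R -> C) : R -> R -> C :=
  match l with
  | nil => f
  | b :: l' => (if b then Dp else Dq) (iterD l' f)
  end.

Definition inU (p q : R) : Prop := (p, q) <> (0, 0).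

Definition smoothU (f : R -> R -> C) : Prop :=
  forall (l : list bool) (p q : R), inU p q ->
    continuous (fun z : R * R => iterD l f (fst z) (snd z)) (p, q) /\
    ex_derive (fun t => fst (iterD l f t q)) p /\
    ex_derive (fun t => snd (iterD l f t q)) p /\
    ex_derive (fun t => fst (iterD l f p t)) q /\
    ex_derive (fun t => snd (iterD l f p t)) q.

(* superfunction F0 + tau F1 *)
Record superfun := SF { sf0 : R -> R -> C ; sf1 : R -> R -> C }.

Definition sf_smooth (F : superfun) : Prop := smoothU (sf0 F) /\ smoothU (sf1 F).

(* pure parity s (false = even: F = F0, true = odd: F = tau F1), on U *)
Definition has_parity (F : superfun) (s : bool) : Prop :=
  forall p q, inU p q -> (if s then sf0 F p q = 0%C else sf1 F p q = 0%C).

Definition eqU (F G : superfun) : Prop :=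
  forall p q, inU p q -> sf0 F p q = sf0 G p q /\ sf1 F p q = sf1 G p q.

(* algebra operations; tau^2 = 0, tau commutes with p, q *)
Definition sf_add (F G : superfun) : superfun :=
  SF (fun p q => (sf0 F p q + sf0 G p q)%C) (fun p q => (sf1 F p q + sf1 G p q)%C).
Definition sf_sub (F G : superfun) : superfun :=
  SF (fun p q => (sf0 F p q - sf0 G p q)%C) (fun p q => (sf1 F p q - sf1 G p q)%C).
Definition sf_scal (c : C) (F : superfun) : superfun :=
  SF (fun p q => (c * sf0 F p q)%C) (fun p q => (c * sf1 F p q)%C).
Definition sf_mul (F G : superfun) : superfun :=
  SF (fun p q => (sf0 F p q * sf0 G p q)%C)
     (fun p q => (sf0 F p q * sf1 G p q + sf1 F p q * sf0 G p q)%C).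
Definition sf_tau (F : superfun) : superfun :=
  SF (fun _ _ => 0%C) (fun p q => sf0 F p q).

Definition sf_Dp (F : superfun) : superfun := SF (Dp (sf0 F)) (Dp (sf1 F)).
Definition sf_Dq (F : superfun) : superfun := SF (Dq (sf0 F)) (Dq (sf1 F)).
Definition sf_Dtau (F : superfun) : superfun := SF (sf1 F) (fun _ _ => 0%C).

Definition sf_p : superfun := SF (fun p _ => RtoC p) (fun _ _ => 0%C).
Definition sf_q : superfun := SF (fun _ q => RtoC q) (fun _ _ => 0%C).

Definition euler (F : superfun) : superfun :=
  sf_add (sf_add (sf_mul sf_p (sf_Dp F)) (sf_mul sf_q (sf_Dq F)))
         (sf_tau (sf_Dtau F)).

Definition sgn (s : bool) : C := if s then (-1)%C else 1%C.

Definition pb (F G : superfun) : superfun :=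
  sf_add (sf_sub (sf_mul (sf_Dp F) (sf_Dq G)) (sf_mul (sf_Dq F) (sf_Dp G)))
         (sf_mul (sf_Dtau F) (sf_Dtau G)).

(* ghost Poisson bracket; sF is the parity sigma(F) of the first argument *)
Definition gpb (sF : bool) (F G : superfun) : superfun :=
  sf_add (sf_sub (sf_mul (sf_Dtau F) (euler G))
                 (sf_scal (sgn sF) (sf_mul (euler F) (sf_Dtau G))))
         (sf_tau (sf_sub (sf_mul (sf_Dp F) (sf_Dq G)) (sf_mul (sf_Dq F) (sf_Dp G)))).

(* Main.v *)
Require Import Defs.
From Stdlib Require Import Reals List Lra.
From Coquelicot Require Import Coquelicot.
Open Scope R_scope.

Definition isD (b : bool) (f : R -> R -> C) (p q : R) (a : C) : Prop :=
  if b then is_derive (fun t => fst (f t q)) p (fst a) /\ is_derive (fun t => snd (f t q)) p (snd a)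
  else is_derive (fun t => fst (f p t)) q (fst a) /\ is_derive (fun t => snd (f p t)) q (snd a).

Definition Dd (b : bool) := if b then Dp else Dq.

Lemma is_derive_eq (f : R -> R) (x l l2 : R) : is_derive f x l -> @eq R l l2 -> is_derive f x l2.
Proof. intros H E; subst; exact H. Qed.

Lemma dR_plus (f g : R -> R) x a b : is_derive f x a -> is_derive g x b ->
  is_derive (fun t => f t + g t) x (a + b).
Proof. intros H1 H2. exact (is_derive_plus f g x a b H1 H2). Qed.
Lemma dR_opp (f : R -> R) x a : is_derive f x a ->
  is_derive (fun t => - f t) x (- a).
Proof. intros H1. exact (is_derive_opp f x a H1). Qed.
Lemma dR_minus (f g : R -> R) x a b : is_derive f x a -> is_derive g x b ->
  is_derive (fun t => f t - g t) x (a - b).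
Proof. intros H1 H2. exact (is_derive_minus f g x a b H1 H2). Qed.
Lemma dR_mult (f g : R -> R) x a b : is_derive f x a -> is_derive g x b ->
  is_derive (fun t => f t * g t) x (a * g x + f x * b).
Proof. intros H1 H2. exact (is_derive_mult f g x a b H1 H2 Rmult_comm). Qed.
Lemma dR_const (c : R) x : is_derive (fun _ => c) x 0.
Proof. exact (is_derive_const c x). Qed.
Lemma dR_id x : is_derive (fun t => t) x 1.
Proof. exact (is_derive_id x). Qed.

Lemma isD_Dd b f p q a : isD b f p q a -> Dd b f p q = a.
Proof.
  destruct a as [a1 a2]; destruct b; unfold isD, Dd, Dp, Dq; intros [H1 H2];
  f_equal; apply is_derive_unique; assumption.
Qed.

Lemma isD_add b f g p q a c : isD b f p q a -> isD b g p q c ->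
  isD b (fun x y => (f x y + g x y)%C) p q (a + c)%C.
Proof.
  destruct b; unfold isD; intros [H1 H2] [H3 H4]; split;
  (eapply is_derive_eq; [apply dR_plus; eassumption | reflexivity]).
Qed.

Lemma isD_opp b f p q a : isD b f p q a ->
  isD b (fun x y => (- f x y)%C) p q (- a)%C.
Proof.
  destruct b; unfold isD; intros [H1 H2]; split;
  (eapply is_derive_eq; [apply dR_opp; eassumption | reflexivity]).
Qed.

Lemma isD_sub b f g p q a c : isD b f p q a -> isD b g p q c ->
  isD b (fun x y => (f x y - g x y)%C) p q (a - c)%C.
Proof.
  intros H1 H2. unfold Cminus. apply isD_add; auto. apply isD_opp; auto.
Qed.

Lemma isD_mul b f g p q a c : isD b f p q a -> isD b g p q c ->
  isD b (fun x y => (f x y * g x y)%C) p q (a * g p q + f p q * c)%C.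
Proof.
  destruct b; unfold isD; intros [H1 H2] [H3 H4]; cbn [Cmult Cplus fst snd]; split.
  - eapply is_derive_eq. apply dR_minus. apply dR_mult; eassumption. apply dR_mult; eassumption. cbv beta; ring.
  - eapply is_derive_eq. apply dR_plus. apply dR_mult; eassumption. apply dR_mult; eassumption. cbv beta; ring.
  - eapply is_derive_eq. apply dR_minus. apply dR_mult; eassumption. apply dR_mult; eassumption. cbv beta; ring.
  - eapply is_derive_eq. apply dR_plus. apply dR_mult; eassumption. apply dR_mult; eassumption. cbv beta; ring.
Qed.

Lemma isD_const b (c : C) p q : isD b (fun _ _ => c) p q 0%C.
Proof. destruct b; unfold isD; split; [exact (dR_const (fst c) p)|exact (dR_const (snd c) p)|exact (dR_const (fst c) q)|exact (dR_const (snd c) q)]. Qed.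

Lemma isD_p b p q : isD b (fun x _ => RtoC x) p q (if b then 1 else 0)%C.
Proof. destruct b; unfold isD; split; [exact (dR_id p)|exact (dR_const 0 p)|exact (dR_const p q)|exact (dR_const 0 q)]. Qed.
Lemma isD_q b p q : isD b (fun _ y => RtoC y) p q (if b then 0 else 1)%C.
Proof. destruct b; unfold isD; split; [exact (dR_const q p)|exact (dR_const 0 p)|exact (dR_id q)|exact (dR_const 0 q)]. Qed.

Lemma isD_atom b l f p q : smoothU f -> inU p q -> isD b (iterD l f) p q (Dd b (iterD l f) p q).
Proof.
  intros Hs Hu. destruct (Hs l p q Hu) as [_ [e1 [e2 [e3 e4]]]].
  destruct b; unfold isD, Dd, Dp, Dq; simpl fst; simpl snd; split; apply Derive_correct; assumption.
Qed.

Lemma sv0_add A B p q a c : sf0 A p q = a -> sf0 B p q = c -> sf0 (sf_add A B) p q = (a + c)%C.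
Proof. intros; subst; reflexivity. Qed.
Lemma sv1_add A B p q a c : sf1 A p q = a -> sf1 B p q = c -> sf1 (sf_add A B) p q = (a + c)%C.
Proof. intros; subst; reflexivity. Qed.
Lemma sv0_sub A B p q a c : sf0 A p q = a -> sf0 B p q = c -> sf0 (sf_sub A B) p q = (a - c)%C.
Proof. intros; subst; reflexivity. Qed.
Lemma sv1_sub A B p q a c : sf1 A p q = a -> sf1 B p q = c -> sf1 (sf_sub A B) p q = (a - c)%C.
Proof. intros; subst; reflexivity. Qed.
Lemma sv0_scal k A p q a : sf0 A p q = a -> sf0 (sf_scal k A) p q = (k * a)%C.
Proof. intros; subst; reflexivity. Qed.
Lemma sv1_scal k A p q a : sf1 A p q = a -> sf1 (sf_scal k A) p q = (k * a)%C.
Proof. intros; subst; reflexivity. Qed.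
Lemma sv0_mul A B p q a0 c0 : sf0 A p q = a0 -> sf0 B p q = c0 -> sf0 (sf_mul A B) p q = (a0 * c0)%C.
Proof. intros; subst; reflexivity. Qed.
Lemma sv1_mul A B p q a0 a1 c0 c1 : sf0 A p q = a0 -> sf1 A p q = a1 -> sf0 B p q = c0 -> sf1 B p q = c1 ->
  sf1 (sf_mul A B) p q = (a0 * c1 + a1 * c0)%C.
Proof. intros; subst; reflexivity. Qed.
Lemma sv0_tau A p q : sf0 (sf_tau A) p q = 0%C.
Proof. reflexivity. Qed.
Lemma sv1_tau A p q a : sf0 A p q = a -> sf1 (sf_tau A) p q = a.
Proof. intros; subst; reflexivity. Qed.
Lemma sv0_Dtau A p q a : sf1 A p q = a -> sf0 (sf_Dtau A) p q = a.
Proof. intros; subst; reflexivity. Qed.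
Lemma sv1_Dtau A p q : sf1 (sf_Dtau A) p q = 0%C.
Proof. reflexivity. Qed.
Lemma sv0_Dp A p q a : isD true (sf0 A) p q a -> sf0 (sf_Dp A) p q = a.
Proof. intros H; exact (isD_Dd _ _ _ _ _ H). Qed.
Lemma sv1_Dp A p q a : isD true (sf1 A) p q a -> sf1 (sf_Dp A) p q = a.
Proof. intros H; exact (isD_Dd _ _ _ _ _ H). Qed.
Lemma sv0_Dq A p q a : isD false (sf0 A) p q a -> sf0 (sf_Dq A) p q = a.
Proof. intros H; exact (isD_Dd _ _ _ _ _ H). Qed.
Lemma sv1_Dq A p q a : isD false (sf1 A) p q a -> sf1 (sf_Dq A) p q = a.
Proof. intros H; exact (isD_Dd _ _ _ _ _ H). Qed.
Lemma sv0_p p q : sf0 sf_p p q = RtoC p.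
Proof. reflexivity. Qed.
Lemma sv1_p p q : sf1 sf_p p q = 0%C.
Proof. reflexivity. Qed.
Lemma sv0_q p q : sf0 sf_q p q = RtoC q.
Proof. reflexivity. Qed.
Lemma sv1_q p q : sf1 sf_q p q = 0%C.
Proof. reflexivity. Qed.

Lemma sd0_add b A B p q a c : isD b (sf0 A) p q a -> isD b (sf0 B) p q c -> isD b (sf0 (sf_add A B)) p q (a + c)%C.
Proof. apply isD_add. Qed.
Lemma sd1_add b A B p q a c : isD b (sf1 A) p q a -> isD b (sf1 B) p q c -> isD b (sf1 (sf_add A B)) p q (a + c)%C.
Proof. apply isD_add. Qed.
Lemma sd0_sub b A B p q a c : isD b (sf0 A) p q a -> isD b (sf0 B) p q c -> isD b (sf0 (sf_sub A B)) p q (a - c)%C.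
Proof. apply isD_sub. Qed.
Lemma sd1_sub b A B p q a c : isD b (sf1 A) p q a -> isD b (sf1 B) p q c -> isD b (sf1 (sf_sub A B)) p q (a - c)%C.
Proof. apply isD_sub. Qed.
Lemma sd0_scal b k A p q a : isD b (sf0 A) p q a -> isD b (sf0 (sf_scal k A)) p q (0 * sf0 A p q + k * a)%C.
Proof. intros H. exact (isD_mul b (fun _ _ => k) (sf0 A) p q _ _ (isD_const b k p q) H). Qed.
Lemma sd1_scal b k A p q a : isD b (sf1 A) p q a -> isD b (sf1 (sf_scal k A)) p q (0 * sf1 A p q + k * a)%C.
Proof. intros H. exact (isD_mul b (fun _ _ => k) (sf1 A) p q _ _ (isD_const b k p q) H). Qed.
Lemma sd0_mul b A B p q da dc a c : isD b (sf0 A) p q da -> isD b (sf0 B) p q dc ->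
  sf0 A p q = a -> sf0 B p q = c -> isD b (sf0 (sf_mul A B)) p q (da * c + a * dc)%C.
Proof. intros H1 H2 E1 E2. rewrite <- E1, <- E2. exact (isD_mul _ _ _ _ _ _ _ H1 H2). Qed.
Lemma sd1_mul b A B p q da0 da1 dc0 dc1 a0 a1 c0 c1 :
  isD b (sf0 A) p q da0 -> isD b (sf1 A) p q da1 -> isD b (sf0 B) p q dc0 -> isD b (sf1 B) p q dc1 ->
  sf0 A p q = a0 -> sf1 A p q = a1 -> sf0 B p q = c0 -> sf1 B p q = c1 ->
  isD b (sf1 (sf_mul A B)) p q ((da0 * c1 + a0 * dc1) + (da1 * c0 + a1 * dc0))%C.
Proof. intros H1 H2 H3 H4 E1 E2 E3 E4. subst.
  apply isD_add; apply isD_mul; assumption. Qed.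
Lemma sd0_tau b A p q : isD b (sf0 (sf_tau A)) p q 0%C.
Proof. exact (isD_const b 0%C p q). Qed.
Lemma sd1_tau b A p q a : isD b (sf0 A) p q a -> isD b (sf1 (sf_tau A)) p q a.
Proof. auto. Qed.
Lemma sd0_Dtau b A p q a : isD b (sf1 A) p q a -> isD b (sf0 (sf_Dtau A)) p q a.
Proof. auto. Qed.
Lemma sd1_Dtau b A p q : isD b (sf1 (sf_Dtau A)) p q 0%C.
Proof. exact (isD_const b 0%C p q). Qed.
Lemma sd0_p b p q : isD b (sf0 sf_p) p q (if b then 1 else 0)%C.
Proof. exact (isD_p b p q). Qed.
Lemma sd1_p b p q : isD b (sf1 sf_p) p q 0%C.
Proof. exact (isD_const b 0%C p q). Qed.
Lemma sd0_q b p q : isD b (sf0 sf_q) p q (if b then 0 else 1)%C.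
Proof. exact (isD_q b p q). Qed.
Lemma sd1_q b p q : isD b (sf1 sf_q) p q 0%C.
Proof. exact (isD_const b 0%C p q). Qed.
Lemma sdv b f p q : smoothU f -> inU p q -> isD b f p q (Dd b f p q).
Proof. intros. exact (isD_atom b nil f p q H H0). Qed.
Lemma sdDp b f p q : smoothU f -> inU p q -> isD b (Dp f) p q (Dd b (Dp f) p q).
Proof. intros. exact (isD_atom b (true::nil) f p q H H0). Qed.
Lemma sdDq b f p q : smoothU f -> inU p q -> isD b (Dq f) p q (Dd b (Dq f) p q).
Proof. intros. exact (isD_atom b (false::nil) f p q H H0). Qed.

Ltac jet :=
  lazymatch goal with
  | |- sf0 (sf_add _ _) _ _ = _ => eapply sv0_add; jet
  | |- sf1 (sf_add _ _) _ _ = _ => eapply sv1_add; jet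
  | |- sf0 (sf_sub _ _) _ _ = _ => eapply sv0_sub; jet
  | |- sf1 (sf_sub _ _) _ _ = _ => eapply sv1_sub; jet
  | |- sf0 (sf_scal _ _) _ _ = _ => eapply sv0_scal; jet
  | |- sf1 (sf_scal _ _) _ _ = _ => eapply sv1_scal; jet
  | |- sf0 (sf_mul _ _) _ _ = _ => eapply sv0_mul; jet
  | |- sf1 (sf_mul _ _) _ _ = _ => eapply sv1_mul; jet
  | |- sf0 (sf_tau _) _ _ = _ => apply sv0_tau
  | |- sf1 (sf_tau _) _ _ = _ => eapply sv1_tau; jet
  | |- sf0 (sf_Dtau _) _ _ = _ => eapply sv0_Dtau; jet
  | |- sf1 (sf_Dtau _) _ _ = _ => apply sv1_Dtau
  | |- sf0 (sf_Dp _) _ _ = _ => eapply sv0_Dp; jet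
  | |- sf1 (sf_Dp _) _ _ = _ => eapply sv1_Dp; jet
  | |- sf0 (sf_Dq _) _ _ = _ => eapply sv0_Dq; jet
  | |- sf1 (sf_Dq _) _ _ = _ => eapply sv1_Dq; jet
  | |- sf0 sf_p _ _ = _ => apply sv0_p
  | |- sf1 sf_p _ _ = _ => apply sv1_p
  | |- sf0 sf_q _ _ = _ => apply sv0_q
  | |- sf1 sf_q _ _ = _ => apply sv1_q
  | |- sf0 (euler _) _ _ = _ => unfold euler; jet
  | |- sf1 (euler _) _ _ = _ => unfold euler; jet
  | |- sf0 (pb _ _) _ _ = _ => unfold pb; jet
  | |- sf1 (pb _ _) _ _ = _ => unfold pb; jet
  | |- sf0 (gpb _ _ _) _ _ = _ => unfold gpb; jet
  | |- sf1 (gpb _ _ _) _ _ = _ => unfold gpb; jet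
  | |- sf0 ?A _ _ = _ => is_var A; reflexivity
  | |- sf1 ?A _ _ = _ => is_var A; reflexivity
  | |- isD _ (sf0 (sf_add _ _)) _ _ _ => eapply sd0_add; jet
  | |- isD _ (sf1 (sf_add _ _)) _ _ _ => eapply sd1_add; jet
  | |- isD _ (sf0 (sf_sub _ _)) _ _ _ => eapply sd0_sub; jet
  | |- isD _ (sf1 (sf_sub _ _)) _ _ _ => eapply sd1_sub; jet
  | |- isD _ (sf0 (sf_scal _ _)) _ _ _ => eapply sd0_scal; jet
  | |- isD _ (sf1 (sf_scal _ _)) _ _ _ => eapply sd1_scal; jet
  | |- isD _ (sf0 (sf_mul _ _)) _ _ _ => eapply sd0_mul; jet
  | |- isD _ (sf1 (sf_mul _ _)) _ _ _ => eapply sd1_mul; jet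
  | |- isD _ (sf0 (sf_tau _)) _ _ _ => apply sd0_tau
  | |- isD _ (sf1 (sf_tau _)) _ _ _ => eapply sd1_tau; jet
  | |- isD _ (sf0 (sf_Dtau _)) _ _ _ => eapply sd0_Dtau; jet
  | |- isD _ (sf1 (sf_Dtau _)) _ _ _ => apply sd1_Dtau
  | |- isD _ (sf0 sf_p) _ _ _ => apply sd0_p
  | |- isD _ (sf1 sf_p) _ _ _ => apply sd1_p
  | |- isD _ (sf0 sf_q) _ _ _ => apply sd0_q
  | |- isD _ (sf1 sf_q) _ _ _ => apply sd1_q
  | |- isD _ (sf0 (euler _)) _ _ _ => unfold euler; jet
  | |- isD _ (sf1 (euler _)) _ _ _ => unfold euler; jet
  | |- isD _ (sf0 (pb _ _)) _ _ _ => unfold pb; jet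
  | |- isD _ (sf1 (pb _ _)) _ _ _ => unfold pb; jet
  | |- isD _ (sf0 (gpb _ _ _)) _ _ _ => unfold gpb; jet
  | |- isD _ (sf1 (gpb _ _ _)) _ _ _ => unfold gpb; jet
  | |- isD _ (sf0 (sf_Dp ?A)) _ _ _ => is_var A; apply sdDp; assumption
  | |- isD _ (sf1 (sf_Dp ?A)) _ _ _ => is_var A; apply sdDp; assumption
  | |- isD _ (sf0 (sf_Dq ?A)) _ _ _ => is_var A; apply sdDq; assumption
  | |- isD _ (sf1 (sf_Dq ?A)) _ _ _ => is_var A; apply sdDq; assumption
  | |- isD _ (sf0 ?A) _ _ _ => is_var A; apply sdv; assumption
  | |- isD _ (sf1 ?A) _ _ _ => is_var A; apply sdv; assumption
  end.


Lemma inU_loc2d p q : inU p q -> locally_2d (fun u v => inU u v) p q.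
Proof.
  intros Hu. unfold inU in *.
  destruct (Req_dec p 0) as [Hp|Hp].
  - assert (Hq : q <> 0) by (intro; apply Hu; subst; reflexivity).
    assert (Hq' : 0 < Rabs q) by (apply Rabs_pos_lt; exact Hq).
    exists (mkposreal _ Hq'). intros u v _ Hv. simpl in Hv. intro E. injection E; intros; subst.
    rewrite Rminus_0_l, Rabs_Ropp in Hv. lra.
  - assert (Hp' : 0 < Rabs p) by (apply Rabs_pos_lt; exact Hp).
    exists (mkposreal _ Hp'). intros u v Hv _. simpl in Hv. intro E. injection E; intros; subst.
    rewrite Rminus_0_l, Rabs_Ropp in Hv. lra.
Qed.

Lemma loc2d_p (P : R -> R -> Prop) p q : locally_2d P p q -> locally p (fun t => P t q).
Proof.
  intros [d Hd]. exists d. intros y Hy. apply Hd. exact Hy. rewrite Rminus_eq_0, Rabs_R0. apply cond_pos.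
Qed.
Lemma loc2d_q (P : R -> R -> Prop) p q : locally_2d P p q -> locally q (fun t => P p t).
Proof.
  intros [d Hd]. exists d. intros y Hy. apply Hd. rewrite Rminus_eq_0, Rabs_R0. apply cond_pos. exact Hy.
Qed.

Lemma Dd_ext b f g p q : (forall u v, inU u v -> f u v = g u v) -> inU p q -> Dd b f p q = Dd b g p q.
Proof.
  intros E Hu. pose proof (inU_loc2d _ _ Hu) as L.
  destruct b; unfold Dd, Dp, Dq; f_equal; apply Derive_ext_loc.
  - generalize (loc2d_p _ _ _ L). apply filter_imp. intros t Ht. rewrite (E _ _ Ht). reflexivity.
  - generalize (loc2d_p _ _ _ L). apply filter_imp. intros t Ht. rewrite (E _ _ Ht). reflexivity.
  - generalize (loc2d_q _ _ _ L). apply filter_imp. intros t Ht. rewrite (E _ _ Ht). reflexivity.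
  - generalize (loc2d_q _ _ _ L). apply filter_imp. intros t Ht. rewrite (E _ _ Ht). reflexivity.
Qed.

Lemma Dd_zero b (f : R -> R -> C) : (forall u v, inU u v -> f u v = 0%C) -> forall p q, inU p q -> Dd b f p q = 0%C.
Proof.
  intros E p q Hu. rewrite (Dd_ext b f (fun _ _ => 0%C) p q E Hu).
  destruct b; unfold Dd, Dp, Dq; simpl; rewrite Derive_const; reflexivity.
Qed.

Lemma iterD_zero l (f : R -> R -> C) : (forall u v, inU u v -> f u v = 0%C) -> forall p q, inU p q -> iterD l f p q = 0%C.
Proof.
  induction l as [|b l IH]; intros E p q Hu; simpl. apply E; auto.
  exact (Dd_zero b _ (IH E) p q Hu).
Qed.

Lemma cont_fst (c : C) : continuous (fst : C -> R) c.
Proof. destruct c. apply continuous_fst. Qed.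
Lemma cont_snd (c : C) : continuous (snd : C -> R) c.
Proof. destruct c. apply continuous_snd. Qed.

Lemma schwarz_real (h : R -> R -> R) p q :
  locally_2d (fun u v => ex_derive (fun z => h z v) u /\ ex_derive (fun z => h u z) v /\
     ex_derive (fun z => Derive (fun t => h z t) v) u /\ ex_derive (fun z => Derive (fun t => h t z) u) v) p q ->
  continuity_2d_pt (fun u v => Derive (fun z => Derive (fun t => h z t) v) u) p q ->
  continuity_2d_pt (fun u v => Derive (fun z => Derive (fun t => h t z) u) v) p q ->
  Derive (fun z => Derive (fun t => h z t) q) p = Derive (fun z => Derive (fun t => h t z) p) q.
Proof. apply Schwarz. Qed.

Lemma schwarz f p q : smoothU f -> inU p q -> Dq (Dp f) p q = Dp (Dq f) p q.
Proof.
  intros Hs Hu. pose proof (inU_loc2d _ _ Hu) as L.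
  unfold Dp at 2, Dq at 1. unfold Dp at 1, Dq at 2. simpl.
  f_equal; symmetry; apply schwarz_real.
  - destruct L as [d Hd]. exists d. intros u v H1 H2. specialize (Hd u v H1 H2).
    destruct (Hs nil u v Hd) as [_ [e1 [e2 [e3 e4]]]].
    destruct (Hs (false::nil) u v Hd) as [_ [e5 [e6 _]]].
    destruct (Hs (true::nil) u v Hd) as [_ [_ [_ [e7 e8]]]].
    simpl in *. unfold Dp, Dq in *. simpl in *. tauto.
  - apply continuity_2d_pt_filterlim.
    destruct (Hs (true::false::nil) p q Hu) as [c _].
    exact (filterlim_comp _ _ _ _ fst _ _ _ c (cont_fst _)).
  - apply continuity_2d_pt_filterlim.
    destruct (Hs (false::true::nil) p q Hu) as [c _].
    exact (filterlim_comp _ _ _ _ fst _ _ _ c (cont_fst _)).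
  - destruct L as [d Hd]. exists d. intros u v H1 H2. specialize (Hd u v H1 H2).
    destruct (Hs nil u v Hd) as [_ [e1 [e2 [e3 e4]]]].
    destruct (Hs (false::nil) u v Hd) as [_ [e5 [e6 _]]].
    destruct (Hs (true::nil) u v Hd) as [_ [_ [_ [e7 e8]]]].
    simpl in *. unfold Dp, Dq in *. simpl in *. tauto.
  - apply continuity_2d_pt_filterlim.
    destruct (Hs (true::false::nil) p q Hu) as [c _].
    exact (filterlim_comp _ _ _ _ snd _ _ _ c (cont_snd _)).
  - apply continuity_2d_pt_filterlim.
    destruct (Hs (false::true::nil) p q Hu) as [c _].
    exact (filterlim_comp _ _ _ _ snd _ _ _ c (cont_snd _)).
Qed.

Lemma RtoC_m1 : RtoC (-1) = (- RtoC 1)%C.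
Proof. unfold RtoC, Copp; simpl. f_equal; ring. Qed.
Lemma RtoC_2 : RtoC 2 = (RtoC 1 + RtoC 1)%C.
Proof. unfold RtoC, Cplus; simpl. f_equal; ring. Qed.
Lemma RtoC_neq0 x : x <> 0 -> RtoC x <> 0%C.
Proof. intros H E. apply H. unfold RtoC in E. injection E. auto. Qed.
Lemma two_neq0 : (RtoC 1 + RtoC 1)%C <> 0%C.
Proof. rewrite <- RtoC_2. apply RtoC_neq0. lra. Qed.
Lemma eq_from (x y c d k : C) : x = y -> (c - d = k * (x - y))%C -> c = d.
Proof. intros E1 E2. rewrite E1 in E2.
  replace c with (d + (c - d))%C by ring. rewrite E2. ring. Qed.

Ltac evalH H :=
  lazymatch type of H with
  | Dd ?b ?f ?p ?q = Dd ?b ?g ?p ?q =>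
      let e1 := fresh in let e2 := fresh in
      eassert (e1 : isD b f p q _) by jet; eassert (e2 : isD b g p q _) by jet;
      rewrite (isD_Dd _ _ _ _ _ e1), (isD_Dd _ _ _ _ _ e2) in H; clear e1 e2
  | ?l = ?r =>
      let e1 := fresh in let e2 := fresh in
      eassert (e1 : l = _) by jet; eassert (e2 : r = _) by jet;
      rewrite e1, e2 in H; clear e1 e2
  end.
Ltac evalG :=
  lazymatch goal with
  | |- ?l = ?r =>
      let e1 := fresh in let e2 := fresh in
      eassert (e1 : l = _) by jet; eassert (e2 : r = _) by jet;
      rewrite e1, e2; clear e1 e2
  end.

Ltac rwz z h00 h10 h0p h0q h1p h1q :=
  try rewrite z in h00; try rewrite z in h10; try rewrite z in h0p; try rewrite z in h0q;
  try rewrite z in h1p; try rewrite z in h1q; try rewrite z.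

Ltac zeroize f Z Hu h00 h10 h0p h0q h1p h1q :=
  lazymatch type of Hu with inU ?p ?q =>
  let z0 := fresh "z" in let z1 := fresh "z" in let z2 := fresh "z" in
  let z3 := fresh "z" in let z4 := fresh "z" in let z5 := fresh "z" in let z6 := fresh "z" in
  pose proof (iterD_zero nil f Z p q Hu) as z0;
  pose proof (iterD_zero (true::nil) f Z p q Hu) as z1;
  pose proof (iterD_zero (false::nil) f Z p q Hu) as z2;
  pose proof (iterD_zero (true::true::nil) f Z p q Hu) as z3;
  pose proof (iterD_zero (true::false::nil) f Z p q Hu) as z4;
  pose proof (iterD_zero (false::true::nil) f Z p q Hu) as z5;
  pose proof (iterD_zero (false::false::nil) f Z p q Hu) as z6;
  cbn [iterD] in z0, z1, z2, z3, z4, z5, z6;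
  rwz z0 h00 h10 h0p h0q h1p h1q; rwz z1 h00 h10 h0p h0q h1p h1q; rwz z2 h00 h10 h0p h0q h1p h1q;
  rwz z3 h00 h10 h0p h0q h1p h1q; rwz z4 h00 h10 h0p h0q h1p h1q; rwz z5 h00 h10 h0p h0q h1p h1q;
  rwz z6 h00 h10 h0p h0q h1p h1q;
  clear z0 z1 z2 z3 z4 z5 z6
  end.

Ltac par X PX Hu h00 h10 h0p h0q h1p h1q :=
  lazymatch type of PX with
  | has_parity _ true => zeroize (sf0 X) PX Hu h00 h10 h0p h0q h1p h1q
  | has_parity _ false => zeroize (sf1 X) PX Hu h00 h10 h0p h0q h1p h1q
  end.

Ltac fld := field; repeat split; first [apply RtoC_neq0; assumption | apply two_neq0 | idtac].


Ltac relq F PF p q h00 h10 h0p h0q h1p h1q :=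
  lazymatch type of PF with
    | has_parity _ false =>
      assert (e1 : (sf0 F p q = (RtoC p * Dp (sf0 F) p q + RtoC q * Dq (sf0 F) p q) / (RtoC 1 + RtoC 1))%C)
        by (apply (eq_from _ _ _ _ (- / (RtoC 1 + RtoC 1))%C h00); fld);
        assert (e3 : (Dq (Dq (sf0 F)) p q = (Dq (sf0 F) p q - RtoC p * Dp (Dq (sf0 F)) p q) / RtoC q)%C)
          by (apply (eq_from _ _ _ _ (/ RtoC q)%C h0q); fld);
        assert (e2 : (Dp (Dq (sf0 F)) p q = (Dp (sf0 F) p q - RtoC p * Dp (Dp (sf0 F)) p q) / RtoC q)%C)
          by (apply (eq_from _ _ _ _ (/ RtoC q)%C h0p); fld);
        rewrite ?e3; rewrite ?e2; rewrite ?e1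
    | has_parity _ true =>
      assert (e1 : (sf1 F p q = (RtoC p * Dp (sf1 F) p q + RtoC q * Dq (sf1 F) p q))%C)
        by (apply (eq_from _ _ _ _ (- RtoC 1)%C h10); fld);
        assert (e3 : (Dq (Dq (sf1 F)) p q = - (RtoC p * Dp (Dq (sf1 F)) p q) / RtoC q)%C)
          by (apply (eq_from _ _ _ _ (/ RtoC q)%C h1q); fld);
        assert (e2 : (Dp (Dq (sf1 F)) p q = - (RtoC p * Dp (Dp (sf1 F)) p q) / RtoC q)%C)
          by (apply (eq_from _ _ _ _ (/ RtoC q)%C h1p); fld);
        rewrite ?e3; rewrite ?e2; rewrite ?e1
  end.

Ltac relp F PF p q h00 h10 h0p h0q h1p h1q :=
  lazymatch type of PF with
    | has_parity _ false =>
      assert (e1 : (sf0 F p q = (RtoC p * Dp (sf0 F) p q + RtoC q * Dq (sf0 F) p q) / (RtoC 1 + RtoC 1))%C)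
        by (apply (eq_from _ _ _ _ (- / (RtoC 1 + RtoC 1))%C h00); fld);
        assert (e2 : (Dp (Dp (sf0 F)) p q = (Dp (sf0 F) p q - RtoC q * Dp (Dq (sf0 F)) p q) / RtoC p)%C)
          by (apply (eq_from _ _ _ _ (/ RtoC p)%C h0p); fld);
        assert (e3 : (Dp (Dq (sf0 F)) p q = (Dq (sf0 F) p q - RtoC q * Dq (Dq (sf0 F)) p q) / RtoC p)%C)
          by (apply (eq_from _ _ _ _ (/ RtoC p)%C h0q); fld);
        rewrite ?e2; rewrite ?e3; rewrite ?e1
    | has_parity _ true =>
      assert (e1 : (sf1 F p q = (RtoC p * Dp (sf1 F) p q + RtoC q * Dq (sf1 F) p q))%C)
        by (apply (eq_from _ _ _ _ (- RtoC 1)%C h10); fld);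
        assert (e2 : (Dp (Dp (sf1 F)) p q = - (RtoC q * Dp (Dq (sf1 F)) p q) / RtoC p)%C)
          by (apply (eq_from _ _ _ _ (/ RtoC p)%C h1p); fld);
        assert (e3 : (Dp (Dq (sf1 F)) p q = - (RtoC q * Dq (Dq (sf1 F)) p q) / RtoC p)%C)
          by (apply (eq_from _ _ _ _ (/ RtoC p)%C h1q); fld);
        rewrite ?e2; rewrite ?e3; rewrite ?e1
  end.

Theorem theorem1 (F G H : superfun) (sF sG sH : bool) :
  sf_smooth F -> sf_smooth G -> sf_smooth H ->
  has_parity F sF -> has_parity G sG -> has_parity H sH ->
  eqU (euler F) (sf_scal (RtoC 2) F) ->
  eqU (pb F (gpb sG G H))
      (sf_add (sf_scal (sgn sF) (gpb (xorb sF sG) (pb F G) H))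
              (sf_scal (sgn (sF && negb sG)) (gpb sG G (pb F H)))).
Proof.
  intros [SF0 SF1] [SG0 SG1] [SH0 SH1] PF PG PH HE p q Hu.
  assert (h00 : sf0 (euler F) p q = sf0 (sf_scal (RtoC 2) F) p q) by (apply HE; exact Hu).
  assert (h10 : sf1 (euler F) p q = sf1 (sf_scal (RtoC 2) F) p q) by (apply HE; exact Hu).
  assert (h0p : Dd true (sf0 (euler F)) p q = Dd true (sf0 (sf_scal (RtoC 2) F)) p q)
    by (apply Dd_ext; [intros u v Huv; apply (HE u v Huv) | exact Hu]).
  assert (h0q : Dd false (sf0 (euler F)) p q = Dd false (sf0 (sf_scal (RtoC 2) F)) p q)
    by (apply Dd_ext; [intros u v Huv; apply (HE u v Huv) | exact Hu]).
  assert (h1p : Dd true (sf1 (euler F)) p q = Dd true (sf1 (sf_scal (RtoC 2) F)) p q)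
    by (apply Dd_ext; [intros u v Huv; apply (HE u v Huv) | exact Hu]).
  assert (h1q : Dd false (sf1 (euler F)) p q = Dd false (sf1 (sf_scal (RtoC 2) F)) p q)
    by (apply Dd_ext; [intros u v Huv; apply (HE u v Huv) | exact Hu]).
  evalH h00. evalH h10. evalH h0p. evalH h0q. evalH h1p. evalH h1q.
  split; evalG.
  all: cbn [Dd] in *.
  all: rewrite ?(schwarz (sf0 F) p q SF0 Hu), ?(schwarz (sf1 F) p q SF1 Hu),
    ?(schwarz (sf0 G) p q SG0 Hu), ?(schwarz (sf1 G) p q SG1 Hu),
    ?(schwarz (sf0 H) p q SH0 Hu), ?(schwarz (sf1 H) p q SH1 Hu) in *.
  all: rewrite ?RtoC_2 in *.
  all: destruct sF, sG, sH; cbn [sgn xorb andb negb] in *; rewrite ?RtoC_m1 in *.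
  all: par F PF Hu h00 h10 h0p h0q h1p h1q; par G PG Hu h00 h10 h0p h0q h1p h1q; par H PH Hu h00 h10 h0p h0q h1p h1q.
  all: idtac "Y".
  all: destruct (Req_dec p 0) as [Hp|Hp];
    [ assert (Hq : q <> 0) by (intro; apply Hu; subst; reflexivity); relq F PF p q h00 h10 h0p h0q h1p h1q | relp F PF p q h00 h10 h0p h0q h1p h1q ].
  all: idtac "Z".
  all: fld.
Qed.
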